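(* Let $E:[0,\infty)\times\mathbb{R}^2\to\mathbb{R}^2$ and $b:[0,\infty)\times\mathbb{R}^2\to\mathbb{R}$ be continuous, with $b(t,x)\neq 0$ for all $(t,x)$, and set $B(t,x)=b(t,x)\,e_3$. Fix $\Delta t>0$, $T>0$, set $t^n=n\Delta t$ and $N_T=\lfloor T/\Delta t\rfloor$. For each $\varepsilon>0$ let $(x^n_\varepsilon,v^n_\varepsilon)_{0\le n\le N_T}\subset\mathbb{R}^2\times\mathbb{R}^2$ satisfy, for $0\le n\le N_T-1$, the first-order semi-implicit scheme $$\frac{x^{n+1}_\varepsilon-x^n_\varepsilon}{\Delta t}=\frac{v^{n+1}_\varepsilon}{\varepsilon},\qquad \frac{v^{n+1}_\varepsilon-v^n_\varepsilon}{\Delta t}=\frac1\varepsilon\Big(\frac{v^{n+1}_\varepsilon}{\varepsilon}\wedge B(t^n,x^n_\varepsilon)+E(t^n,x^n_\varepsilon)\Big).$$ Assume that for every $1\le n\le N_T$ the family $(x^n_\varepsilon,\varepsilon v^n_\varepsilon)_{\varepsilon>0}$ is bounded uniformly in $\varepsilon$, and that $(x^0_\varepsilon,\varepsilon v^0_\varepsilon)\to(y^0,0)$ as $\varepsilon\to0$. Then for every $0\le n\le N_T$, $x^n_\varepsilon\to y^n$ as $\varepsilon\to0$, where $(y^n)$ is defined by the given $y^0$ and $$\frac{y^{n+1}-y^n}{\Delta t}=U(t^n,y^n),\qquad 0\le n\le N_T-1.$$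
   Context: Vectors of $\mathbb{R}^2$ are identified with vectors $(w_1,w_2,0)$ of $\mathbb{R}^3$, $e_3=(0,0,1)$, and $\wedge$ is the cross product; thus for $w\in\mathbb{R}^2$ and $B=b\,e_3$, $w\wedge B=b\,(w_2,-w_1)\in\mathbb{R}^2$. The guiding-center drift is $U(t,x)=\dfrac{E(t,x)\wedge B(t,x)}{\|B(t,x)\|^2}$. *)

(* Defs.v *)
From Stdlib Require Import Reals Lra ZArith.
Open Scope R_scope.

Definition vec2 := (R * R)%type.
Definition vadd (u w : vec2) : vec2 := (fst u + fst w, snd u + snd w).
Definition vsub (u w : vec2) : vec2 := (fst u - fst w, snd u - snd w).
Definition vscal (c : R) (w : vec2) : vec2 := (c * fst w, c * snd w).
Definition vnorm (w : vec2) : R := sqrt (fst w ^ 2 + snd w ^ 2).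
Definition vdist (u w : vec2) : R := vnorm (vsub u w).

(* w /\ (b e3) = b (w2, -w1) *)
Definition wedgeB (w : vec2) (b : R) : vec2 := (b * snd w, - (b * fst w)).

(* guiding-center drift U = (E /\ B) / ||B||^2 with B = b e3, ||B||^2 = b^2 *)
Definition driftU (E : R -> vec2 -> vec2) (b : R -> vec2 -> R) (t : R) (x : vec2) : vec2 :=
  vscal (/ (b t x ^ 2)) (wedgeB (E t x) (b t x)).

Definition cont_vec (F : R -> vec2 -> vec2) : Prop :=
  forall t x, 0 <= t -> forall eta, 0 < eta -> exists delta, 0 < delta /\
    forall s y, 0 <= s -> Rabs (s - t) < delta -> vdist y x < delta ->
      vdist (F s y) (F t x) < eta.
Definition cont_scal (F : R -> vec2 -> R) : Prop :=
  forall t x, 0 <= t -> forall eta, 0 < eta -> exists delta, 0 < delta /\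
    forall s y, 0 <= s -> Rabs (s - t) < delta -> vdist y x < delta ->
      Rabs (F s y - F t x) < eta.

Definition lim_eps0 (f : R -> vec2) (l : vec2) : Prop :=
  forall eta, 0 < eta -> exists delta, 0 < delta /\
    forall eps, 0 < eps < delta -> vdist (f eps) l < eta.

Definition NT (T dt : R) : nat := Z.to_nat (Int_part (T / dt)).

Fixpoint yseq (E : R -> vec2 -> vec2) (b : R -> vec2 -> R) (dt : R) (y0 : vec2) (n : nat) : vec2 :=
  match n with
  | O => y0
  | S m => vadd (yseq E b dt y0 m) (vscal dt (driftU E b (INR m * dt) (yseq E b dt y0 m)))
  end.

(* Main.v *)
Require Import Defs.
From Stdlib Require Import Reals.
From Stdlib Require Import Lra Lia.
From Coquelicot Require Import Coquelicot.
Open Scope R_scope.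

Definition lim0 (f : R -> R) (l : R) : Prop :=
  forall eta, 0 < eta -> exists delta, 0 < delta /\
    forall e, 0 < e < delta -> Rabs (f e - l) < eta.

Lemma lim0_F f l : lim0 f l <-> filterlim f (at_right 0) (locally l).
Proof.
  split.
  - intros H. apply filterlim_locally. intros [eta heta].
    destruct (H eta heta) as [d [hd Hd]].
    exists (mkposreal d hd). intros y Hy Hp.
    change (Rabs (y - 0) < d) in Hy.
    change (Rabs (f y - l) < eta). apply Hd.
    rewrite Rminus_0_r in Hy. split; [lra|].
    apply Rabs_lt_between in Hy; lra.
  - intros H eta heta. pose proof (proj1 (filterlim_locally f l) H (mkposreal eta heta)) as H1.
    destruct H1 as [[d hd] Hd]. exists d; split; [exact hd|].
    intros e [he1 he2]. apply (Hd e).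
    + change (Rabs (e - 0) < d). rewrite Rminus_0_r, Rabs_right; lra.
    + exact he1.
Qed.

Lemma lim0_plus f g lf lg : lim0 f lf -> lim0 g lg -> lim0 (fun e => f e + g e) (lf + lg).
Proof.
  rewrite !lim0_F. intros Hf Hg.
  apply (filterlim_comp_2 f g (fun a b => plus a b) Hf Hg).
  apply (filterlim_plus lf lg).
Qed.

Lemma lim0_mult f g lf lg : lim0 f lf -> lim0 g lg -> lim0 (fun e => f e * g e) (lf * lg).
Proof.
  rewrite !lim0_F. intros Hf Hg.
  apply (filterlim_comp_2 f g (fun a b => mult a b) Hf Hg).
  apply (filterlim_mult lf lg).
Qed.

Lemma lim0_inv f l : l <> 0 -> lim0 f l -> lim0 (fun e => / f e) (/ l).
Proof.
  rewrite !lim0_F. intros Hl Hf.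
  eapply filterlim_comp. exact Hf.
  apply (filterlim_Rbar_inv (Finite l)). intro Hc. apply Hl. injection Hc; auto.
Qed.

Lemma lim0_const c : lim0 (fun _ => c) c.
Proof. intros eta h. exists 1. split; [lra|]. intros. rewrite Rminus_eq_0, Rabs_R0; lra. Qed.

Lemma lim0_id : lim0 (fun e => e) 0.
Proof. intros eta h. exists eta. split; [lra|]. intros e he. rewrite Rminus_0_r, Rabs_right; lra. Qed.

Lemma lim0_ext f g l l' : (forall e, 0 < e -> f e = g e) -> l = l' -> lim0 f l -> lim0 g l'.
Proof.
  intros Hfg <- H eta h. destruct (H eta h) as [d [hd Hd]]. exists d; split; auto.
  intros e he. rewrite <- Hfg by lra. auto.
Qed.

Lemma lim0_bdd f g M : lim0 f 0 -> (forall e, 0 < e -> Rabs (g e) <= M) ->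
  lim0 (fun e => f e * g e) 0.
Proof.
  intros Hf Hg eta h.
  destruct (Hf (eta / (Rabs M + 1))) as [d [hd Hd]].
  { apply Rdiv_lt_0_compat; [lra|]. pose proof (Rabs_pos M); lra. }
  exists d; split; auto. intros e he.
  rewrite Rminus_0_r, Rabs_mult. specialize (Hd e he). rewrite Rminus_0_r in Hd.
  specialize (Hg e (proj1 he)).
  assert (HM : Rabs (g e) <= Rabs M + 1) by (pose proof (Rle_abs M); lra).
  assert (Hp : 0 < Rabs M + 1) by (pose proof (Rabs_pos M); lra).
  apply Rle_lt_trans with (Rabs (f e) * (Rabs M + 1)).
  - apply Rmult_le_compat_l; [apply Rabs_pos|exact HM].
  - apply Rlt_le_trans with (eta / (Rabs M + 1) * (Rabs M + 1)).
    + apply Rmult_lt_compat_r; auto.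
    + right. field. lra.
Qed.

Lemma lim0_minus f g lf lg : lim0 f lf -> lim0 g lg -> lim0 (fun e => f e - g e) (lf - lg).
Proof.
  intros Hf Hg. eapply lim0_ext; [| |apply (lim0_plus _ _ _ _ Hf (lim0_mult _ _ _ _ (lim0_const (-1)) Hg))].
  - intros; simpl; ring.
  - ring.
Qed.

Lemma lim0_l f l l' : lim0 f l -> l = l' -> lim0 f l'.
Proof. intros H <-; exact H. Qed.

Lemma abs_le_vnorm1 w : Rabs (fst w) <= vnorm w.
Proof.
  unfold vnorm. rewrite <- sqrt_Rsqr_abs. apply sqrt_le_1_alt.
  unfold Rsqr. simpl. pose proof (pow2_ge_0 (snd w)). simpl in H. lra.
Qed.

Lemma abs_le_vnorm2 w : Rabs (snd w) <= vnorm w.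
Proof.
  unfold vnorm. rewrite <- sqrt_Rsqr_abs. apply sqrt_le_1_alt.
  unfold Rsqr. simpl. pose proof (pow2_ge_0 (fst w)). simpl in H. lra.
Qed.

Lemma vnorm_le w : vnorm w <= Rabs (fst w) + Rabs (snd w).
Proof.
  unfold vnorm. rewrite <- (sqrt_Rsqr (Rabs (fst w) + Rabs (snd w))).
  2: { pose proof (Rabs_pos (fst w)); pose proof (Rabs_pos (snd w)); lra. }
  apply sqrt_le_1_alt. unfold Rsqr.
  assert (H1 : fst w ^ 2 = Rabs (fst w) * Rabs (fst w)) by (rewrite <- Rabs_mult; simpl; rewrite Rmult_1_r; rewrite Rabs_right; [ring| apply Rle_ge, Rle_0_sqr]).
  assert (H2 : snd w ^ 2 = Rabs (snd w) * Rabs (snd w)) by (rewrite <- Rabs_mult; simpl; rewrite Rmult_1_r; rewrite Rabs_right; [ring| apply Rle_ge, Rle_0_sqr]).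
  rewrite H1, H2. pose proof (Rabs_pos (fst w)); pose proof (Rabs_pos (snd w)).
  nra.
Qed.

Lemma bridge f l : lim_eps0 f l <-> lim0 (fun e => fst (f e)) (fst l) /\ lim0 (fun e => snd (f e)) (snd l).
Proof.
  split.
  - intros H. split; intros eta h; destruct (H eta h) as [d [hd Hd]]; exists d; split; auto;
      intros e he; specialize (Hd e he); unfold vdist in Hd.
    + eapply Rle_lt_trans; [|exact Hd]. apply (abs_le_vnorm1 (vsub (f e) l)).
    + eapply Rle_lt_trans; [|exact Hd]. apply (abs_le_vnorm2 (vsub (f e) l)).
  - intros [H1 H2] eta h.
    destruct (H1 (eta/2)) as [d1 [hd1 Hd1]]; [lra|].
    destruct (H2 (eta/2)) as [d2 [hd2 Hd2]]; [lra|].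
    exists (Rmin d1 d2). split; [apply Rmin_pos; auto|].
    intros e he. unfold vdist. eapply Rle_lt_trans; [apply vnorm_le|].
    simpl. assert (e < d1) by (pose proof (Rmin_l d1 d2); lra).
    assert (e < d2) by (pose proof (Rmin_r d1 d2); lra).
    specialize (Hd1 e ltac:(lra)). specialize (Hd2 e ltac:(lra)). lra.
Qed.


Lemma comp_vec F t Y xs : cont_vec F -> 0 <= t -> lim_eps0 xs Y ->
  lim_eps0 (fun e => F t (xs e)) (F t Y).
Proof.
  intros hF ht H eta h. destruct (hF t Y ht eta h) as [d [hd Hd]].
  destruct (H d hd) as [d' [hd' Hd']]. exists d'; split; auto.
  intros e he. apply Hd; auto. rewrite Rminus_eq_0, Rabs_R0; auto.
Qed.

Lemma comp_scal F t Y xs : cont_scal F -> 0 <= t -> lim_eps0 xs Y ->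
  lim0 (fun e => F t (xs e)) (F t Y).
Proof.
  intros hF ht H eta h. destruct (hF t Y ht eta h) as [d [hd Hd]].
  destruct (H d hd) as [d' [hd' Hd']]. exists d'; split; auto.
  intros e he. apply Hd; auto. rewrite Rminus_eq_0, Rabs_R0; auto.
Qed.

Theorem proposition3p1
  (E : R -> vec2 -> vec2) (b : R -> vec2 -> R)
  (hE : cont_vec E) (hb : cont_scal b)
  (hb0 : forall t x, 0 <= t -> b t x <> 0)
  (dt T : R) (hdt : 0 < dt) (hT : 0 < T)
  (x v : R -> nat -> vec2)
  (hx : forall eps n, 0 < eps -> (n < NT T dt)%nat ->
     vscal (/ dt) (vsub (x eps (S n)) (x eps n)) = vscal (/ eps) (v eps (S n)))
  (hv : forall eps n, 0 < eps -> (n < NT T dt)%nat ->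
     vscal (/ dt) (vsub (v eps (S n)) (v eps n)) =
     vscal (/ eps) (vadd (wedgeB (vscal (/ eps) (v eps (S n))) (b (INR n * dt) (x eps n)))
                         (E (INR n * dt) (x eps n))))
  (hbd : forall n, (1 <= n <= NT T dt)%nat -> exists M, forall eps, 0 < eps ->
     vnorm (x eps n) <= M /\ vnorm (vscal eps (v eps n)) <= M)
  (y0 : vec2)
  (hx0 : lim_eps0 (fun eps => x eps O) y0)
  (hv0 : lim_eps0 (fun eps => vscal eps (v eps O)) (0, 0)) :
  forall n, (n <= NT T dt)%nat -> lim_eps0 (fun eps => x eps n) (yseq E b dt y0 n).
Proof.
  assert (Main : forall n, (n <= NT T dt)%nat ->
    lim_eps0 (fun eps => x eps n) (yseq E b dt y0 n) /\
    lim_eps0 (fun eps => vscal eps (v eps n)) (0, 0)).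
  { induction n as [|n IH]; intros Hn.
    - split; assumption.
    - destruct (IH ltac:(lia)) as [IHx IHv].
      assert (Hlt : (n < NT T dt)%nat) by lia.
      destruct (hbd (S n) ltac:(lia)) as [M HM].
      set (t := INR n * dt).
      assert (ht : 0 <= t) by (unfold t; apply Rmult_le_pos; [apply pos_INR|lra]).
      set (Y := yseq E b dt y0 n).
      apply bridge in IHx. destruct IHx as [X1 X2].
      apply bridge in IHv. destruct IHv as [P1 P2]. simpl in P1, P2.
      pose proof (comp_vec E t Y (fun e => x e n) hE ht) as HE.
      pose proof (comp_scal b t Y (fun e => x e n) hb ht) as HB.
      assert (Hxl : lim_eps0 (fun e => x e n) Y) by (apply bridge; auto).
      specialize (HE Hxl). specialize (HB Hxl).
      apply bridge in HE. destruct HE as [E1 E2].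
      assert (hbY : b t Y <> 0) by (apply hb0; auto).
      assert (HMb1 : forall e, 0 < e -> Rabs (fst (x e (S n))) <= M).
      { intros e he. destruct (HM e he) as [H1 _]. eapply Rle_trans; [apply abs_le_vnorm1|exact H1]. }
      assert (HMb2 : forall e, 0 < e -> Rabs (snd (x e (S n))) <= M).
      { intros e he. destruct (HM e he) as [H1 _]. eapply Rle_trans; [apply abs_le_vnorm2|exact H1]. }
      assert (Q1 : lim0 (fun e => e * fst (v e (S n))) 0).
      { eapply lim0_ext; [| |apply (lim0_plus _ _ _ _
          (lim0_bdd (fun e => e*e*/dt) (fun e => fst (x e (S n))) M
             (lim0_l _ _ 0 (lim0_mult _ _ _ _ (lim0_mult _ _ _ _ lim0_id lim0_id) (lim0_const (/dt))) ltac:(ring)) HMb1)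
          (lim0_mult (fun e => -1*(e*e*/dt)) _ _ _
             (lim0_mult _ _ _ _ (lim0_const (-1)) (lim0_mult _ _ _ _ (lim0_mult _ _ _ _ lim0_id lim0_id) (lim0_const (/dt)))) X1))].
        - intros e he. pose proof (f_equal fst (hx e n he Hlt)) as H. simpl in H.
          replace (e * fst (v e (S n))) with (e*e*(/e*fst (v e (S n)))) by (field; lra).
          rewrite <- H. ring.
        - ring. }
      assert (Q2 : lim0 (fun e => e * snd (v e (S n))) 0).
      { eapply lim0_ext; [| |apply (lim0_plus _ _ _ _
          (lim0_bdd (fun e => e*e*/dt) (fun e => snd (x e (S n))) M
             (lim0_l _ _ 0 (lim0_mult _ _ _ _ (lim0_mult _ _ _ _ lim0_id lim0_id) (lim0_const (/dt))) ltac:(ring)) HMb2)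
          (lim0_mult (fun e => -1*(e*e*/dt)) _ _ _
             (lim0_mult _ _ _ _ (lim0_const (-1)) (lim0_mult _ _ _ _ (lim0_mult _ _ _ _ lim0_id lim0_id) (lim0_const (/dt)))) X2))].
        - intros e he. pose proof (f_equal snd (hx e n he Hlt)) as H. simpl in H.
          replace (e * snd (v e (S n))) with (e*e*(/e*snd (v e (S n)))) by (field; lra).
          rewrite <- H. ring.
        - ring. }
      split.
      + apply bridge. split.
        * eapply lim0_ext; [| |apply (lim0_plus _ _ _ _ X1 (lim0_mult _ _ _ _ (lim0_const dt)
             (lim0_mult _ _ _ _ (lim0_minus _ _ _ _ E2 (lim0_mult _ _ _ _ (lim0_minus _ _ _ _ Q2 P2) (lim0_const (/dt))))
                (lim0_inv _ _ hbY HB))))].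
          -- intros e he. pose proof (hb0 t (x e n) ht) as hbb.
             pose proof (f_equal fst (hx e n he Hlt)) as H1. simpl in H1.
             pose proof (f_equal snd (hv e n he Hlt)) as H2. simpl in H2.
             fold t in H2.
             set (w := / e * fst (v e (S n))) in *.
             assert (K : -(b t (x e n) * w) + snd (E t (x e n)) = e * (/dt * (snd (v e (S n)) - snd (v e n)))).
             { rewrite H2. field. lra. }
             assert (Ha : fst (x e (S n)) = fst (x e n) + dt * w).
             { rewrite <- H1. field. lra. }
             rewrite Ha. replace w with ((b t (x e n) * w) * / b t (x e n)) by (field; auto).
             replace (b t (x e n) * w) with (snd (E t (x e n)) - e * (/dt * (snd (v e (S n)) - snd (v e n)))) by lra.
             field. split; lra.
          -- unfold Y, t. cbn [yseq fst snd vadd vscal driftU wedgeB]. fold t. fold Y. field. split; auto; lra.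
        * eapply lim0_ext; [| |apply (lim0_plus _ _ _ _ X2 (lim0_mult _ _ _ _ (lim0_const dt)
             (lim0_mult _ _ _ _ (lim0_minus _ _ _ _ (lim0_mult _ _ _ _ (lim0_minus _ _ _ _ Q1 P1) (lim0_const (/dt))) E1)
                (lim0_inv _ _ hbY HB))))].
          -- intros e he. pose proof (hb0 t (x e n) ht) as hbb.
             pose proof (f_equal snd (hx e n he Hlt)) as H1. simpl in H1.
             pose proof (f_equal fst (hv e n he Hlt)) as H2. simpl in H2.
             fold t in H2.
             set (w := / e * snd (v e (S n))) in *.
             assert (K : b t (x e n) * w + fst (E t (x e n)) = e * (/dt * (fst (v e (S n)) - fst (v e n)))).
             { rewrite H2. field. lra. }
             assert (Ha : snd (x e (S n)) = snd (x e n) + dt * w).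
             { rewrite <- H1. field. lra. }
             rewrite Ha. replace w with ((b t (x e n) * w) * / b t (x e n)) by (field; auto).
             replace (b t (x e n) * w) with (e * (/dt * (fst (v e (S n)) - fst (v e n))) - fst (E t (x e n))) by lra.
             field. split; lra.
          -- unfold Y, t. cbn [yseq fst snd vadd vscal driftU wedgeB]. fold t. fold Y. field. split; auto; lra.
      + apply bridge; simpl; split; auto. }
  intros n Hn. apply (Main n Hn).
Qed.
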